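(* $\gamma(3)=8$. In particular, the word $abcabacb$ (over three distinct letters $a,b,c$) is s-primitive, and every word of length $9$ over a ternary alphabet is not s-primitive.
   Context: For words $C,S$, $C$ is an \emph{s-cover} of $S$ if for every position $i$ of $S$ there exist indices $j_0<\dots<j_{|C|-1}$ with $S[j_t]=C[t]$ for all $t$ and $i\in\{j_0,\dots,j_{|C|-1}\}$. An s-cover $C$ of $S$ is \emph{non-trivial} if $|C|<|S|$; a word is \emph{s-primitive} if it has no non-trivial s-cover. $\gamma(k)$ is the maximum length of an s-primitive word over an alphabet of size $k$. *)

(* Defs.v *)
From mathcomp Require Import all_boot.
Set Implicit Arguments. Unset Strict Implicit. Unset Printing Implicit Defensive.

Section SCover.
Variable T : eqType.

Definition occurrence (C S : seq T) (j : nat -> nat) : Prop :=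
  (forall t, t.+1 < size C -> j t < j t.+1) /\
  (forall t, t < size C -> j t < size S /\ onth S (j t) = onth C t).

Definition s_cover (C S : seq T) : Prop :=
  forall i, i < size S ->
    exists j, occurrence C S j /\ exists2 t, t < size C & j t = i.

Definition nontrivial_s_cover (C S : seq T) : Prop :=
  s_cover C S /\ size C < size S.

Definition s_primitive (S : seq T) : Prop :=
  ~ exists C, nontrivial_s_cover C S.
End SCover.

Definition gamma_is (k n : nat) : Prop :=
  (exists w : seq 'I_k, s_primitive w /\ size w = n) /\
  (forall w : seq 'I_k, s_primitive w -> size w <= n).

(* Main.v *)
Require Import Defs.
From mathcomp Require Import all_boot zify.
Set Implicit Arguments. Unset Strict Implicit.

Section S.
Variable T : eqType.
Implicit Types C S : seq T.

Lemma onth_take n (s : seq T) i : i < n -> onth (take n s) i = onth s i.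
Proof. by elim: n s i => [|n IH] [|x s] [|i] //= /IH. Qed.

Lemma onth_drop n (s : seq T) i : onth (drop n s) i = onth s (n + i).
Proof. by elim: n s => [|n IH] [|x s] //=; rewrite ?onth0n. Qed.

Lemma occ_mono C S j t1 t2 : occurrence C S j -> t1 < t2 -> t2 < size C -> j t1 < j t2.
Proof.
move=> [Hi _]; elim: t2 => // t2 IH; rewrite ltnS leq_eqVlt => /orP[/eqP-> H|H1 H2].
  exact: Hi.
by apply: ltn_trans (IH H1 (ltnW H2)) (Hi _ H2).
Qed.

Lemma occ_subseq C S j : occurrence C S j -> subseq C S.
Proof.
elim: S C j => [|y S IH] [|x C] j //= [Hinc Hm].
- by case: (Hm 0 isT).
- have mono t : t < size (x :: C) -> j 0 <= j t.
    elim: t => // t IHt Ht; apply: leq_trans (IHt (ltnW Ht)) (ltnW (Hinc _ Ht)).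
  case Hj0: (j 0) => [|k].
  + have := (Hm 0 isT).2; rewrite Hj0 /= => -[->]; rewrite eqxx.
    apply: (IH _ (fun t => (j t.+1).-1)); split.
    * move=> t Ht; have h1 := Hinc t (ltnW Ht); have h2 := Hinc t.+1 Ht; lia.
    * move=> t Ht; have h1 := Hinc t Ht; case: (Hm t.+1 Ht).
      case E: (j t.+1) => [|m]; first lia.
      by rewrite /= ltnS.
  + suff H : subseq (x :: C) S by case: ifP => // _; exact: cons_subseq H.
    apply: (IH _ (fun t => (j t).-1)); split.
    * move=> t Ht; have h1 := Hinc t Ht; have := mono t (ltnW Ht); lia.
    * move=> t Ht; have := mono t Ht; case: (Hm t Ht).
      case E: (j t) => [|m]; first lia.
      by rewrite /= ltnS => -> ->.
Qed.

Lemma subseq_occ C S : subseq C S -> exists j, occurrence C S j.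
Proof.
elim: S C => [|y S IH] [|x C] //=.
- by move=> _; exists id; split.
- by move=> _; exists id; split.
- case: eqP => [->|_] /IH [j [Hinc Hm]].
  + exists (fun t => if t is t'.+1 then (j t').+1 else 0); split.
    * by move=> [|t] //= Ht; rewrite ltnS; apply: Hinc.
    * by move=> [|t] //= Ht; case: (Hm t Ht).
  + exists (fun t => (j t).+1); split.
    * by move=> t Ht; rewrite ltnS; apply: Hinc.
    * by move=> t Ht; case: (Hm t Ht).
Qed.

Definition cov_at C S i t :=
  [&& onth C t == onth S i, subseq (take t C) (take i S) & subseq (drop t.+1 C) (drop i.+1 S)].

Definition scovb C S :=
  all (fun i => has (cov_at C S i) (iota 0 (size C))) (iota 0 (size S)).

Lemma cov_at_of_occ C S j t : occurrence C S j -> t < size C -> cov_at C S (j t) t.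
Proof.
move=> occ Ht; have [Hinc Hm] := occ; apply/and3P; split.
- by rewrite (Hm t Ht).2.
- apply: (occ_subseq (j := j)); split.
  + move=> t' Ht'; apply: Hinc; rewrite size_take Ht in Ht'; lia.
  + move=> t' Ht'; rewrite size_take Ht in Ht'.
    have lt := occ_mono occ Ht' Ht; have [h1 h2] := Hm t' (ltn_trans Ht' Ht).
    rewrite size_take; split; first by case: ifP.
    by rewrite !onth_take.
- apply: (occ_subseq (j := fun t' => j (t.+1 + t') - (j t).+1)); split.
  + move=> t' Ht'; rewrite size_drop in Ht'.
    have h1 := Hinc (t.+1 + t') ltac:(lia).
    have := occ_mono occ (t1 := t) (t2 := t.+1 + t') ltac:(lia) ltac:(lia); rewrite addnS; lia.
  + move=> t' Ht'; rewrite size_drop in Ht'.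
    have := occ_mono occ (t1 := t) (t2 := t.+1 + t') ltac:(lia) ltac:(lia).
    have [h1 h2] := Hm (t.+1 + t') ltac:(lia).
    move=> h3; rewrite size_drop !onth_drop; split; first lia.
    by rewrite subnKC.
Qed.

Lemma occ_of_cov_at C S i t : i < size S -> t < size C -> cov_at C S i t ->
  exists j, occurrence C S j /\ j t = i.
Proof.
move=> Hi Ht /and3P[/eqP E /subseq_occ[j1 [I1 M1]] /subseq_occ[j2 [I2 M2]]].
rewrite size_takel ?(ltnW Ht) // in I1 M1.
rewrite size_drop in I2 M2.
exists (fun t' => if t' < t then j1 t' else if t' == t then i else i.+1 + j2 (t' - t.+1)).
split; last by rewrite ltnn eqxx.
split.
- move=> t' Ht'.
  have [H|[H|H]] : t'.+1 < t \/ t < t'.+1 \/ t'.+1 = t by lia.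
  + have -> : t' < t by lia.
    have -> : t'.+1 < t by lia.
    exact: I1.
  + have -> : (t' < t) = false by lia.
    have -> : (t'.+1 < t) = false by lia.
    have -> : (t'.+1 == t) = false by lia.
    case: eqP => [_|ne]; first lia.
    have := I2 (t' - t.+1) ltac:(lia).
    have -> : (t'.+1 - t.+1) = (t' - t.+1).+1 by lia.
    lia.
  + rewrite -H ltnSn ltnn eqxx.
    have [h _] := M1 t' ltac:(lia).
    rewrite size_takel in h; lia.
- move=> t' Ht'.
  have [H|[H|H]] : t' < t \/ t < t' \/ t' = t by lia.
  + have [h1 h2] := M1 t' H.
    rewrite size_takel in h1; last lia.
    rewrite onth_take // in h2; rewrite onth_take // in h2.
    rewrite H; split; [lia | done].
  + have [h1 h2] := M2 (t' - t.+1) ltac:(lia).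
    rewrite !onth_drop in h2.
    rewrite size_drop in h1.
    have -> : (t' < t) = false by lia.
    have -> : (t' == t) = false by lia.
    split; first lia.
    by rewrite h2; congr onth; lia.
  + by subst t'; rewrite ltnn eqxx; split.
Qed.

Lemma scovbP C S : reflect (s_cover C S) (scovb C S).
Proof.
apply: (iffP allP).
- move=> H i Hi; have /hasP[t] := H i ltac:(by rewrite mem_iota).
  rewrite mem_iota add0n => Ht /(occ_of_cov_at Hi Ht) [j [occ E]].
  by exists j; split => //; exists t.
- move=> H i; rewrite mem_iota add0n => Hi.
  have [j [occ [t Ht E]]] := H i Hi.
  apply/hasP; exists t; first by rewrite mem_iota.
  by rewrite -E; apply: cov_at_of_occ.
Qed.
End S.

Ltac simpl_ifs := repeat match goal with
  |- context [if ?c then _ else _] =>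
    let E := fresh "E" in
    (assert (E : c) by lia; rewrite E; clear E) ||
    (assert (E : ~~ c) by lia; rewrite (negbTE E); clear E) end.

Section S2.
Variable T : eqType.
Implicit Types C S U V X : seq T.

Lemma cover_occ C S : s_cover C S -> 0 < size S -> exists j, occurrence C S j.
Proof. by move=> H /H [j [occ _]]; exists j. Qed.

Lemma occ_app_r C V X j : occurrence C V j ->
  occurrence (C ++ X) (V ++ X) (fun t => if t < size C then j t else size V + (t - size C)).
Proof.
move=> occ; have [Hinc Hm] := occ; split; rewrite size_cat.
- move=> t Ht.
  have [H1|H1] : t.+1 < size C \/ size C <= t.+1 by lia.
  + have -> : t.+1 < size C by lia.
    have -> : t < size C by lia.
    by apply: Hinc.
  + have [H2|H2] : t < size C \/ size C <= t by lia.
    * have [h _] := Hm t H2; simpl_ifs; lia.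
    * simpl_ifs; lia.
- move=> t Ht; rewrite size_cat !onth_cat.
  have [H1|H1] : t < size C \/ size C <= t by lia.
  + have [h1 h2] := Hm t H1; simpl_ifs; split; [lia| by rewrite h2].
  + simpl_ifs; split; first lia.
    by congr onth; lia.
Qed.

Lemma occ_app_l C U V j : occurrence C V j ->
  occurrence (U ++ C) (U ++ V) (fun t => if t < size U then t else size U + j (t - size U)).
Proof.
move=> occ; have [Hinc Hm] := occ; split; rewrite size_cat.
- move=> t Ht.
  have [H1|H1] : t.+1 < size U \/ size U <= t.+1 by lia.
  + have -> : t.+1 < size U by lia.
    have -> : t < size U by lia.
    lia.
  + have [H2|H2] : t < size U \/ size U <= t by lia.
    * simpl_ifs; lia.
    * have := Hinc (t - size U) ltac:(lia).
      have -> : t.+1 - size U = (t - size U).+1 by lia.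
      simpl_ifs; lia.
- move=> t Ht; rewrite size_cat !onth_cat.
  have [H1|H1] : t < size U \/ size U <= t by lia.
  + by simpl_ifs; split; [lia|].
  + have [h1 h2] := Hm (t - size U) ltac:(lia).
    simpl_ifs; split; first lia.
    by rewrite addKn.
Qed.

Lemma cover_app_r C V X : s_cover C V -> 0 < size V -> s_cover (C ++ X) (V ++ X).
Proof.
move=> cov Vp i; rewrite size_cat => Hi.
have [H|H] : i < size V \/ size V <= i by lia.
- have [j [occ [t Ht E]]] := cov i H.
  eexists; split; first exact: occ_app_r occ.
  by exists t; [rewrite size_cat; lia| rewrite Ht].
- have [j occ] := cover_occ cov Vp.
  eexists; split; first exact: occ_app_r occ.
  exists (size C + (i - size V)); first by rewrite size_cat; lia.
  have -> : (size C + (i - size V) < size C) = false by lia.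
  lia.
Qed.

Lemma cover_app_l C U V : s_cover C V -> 0 < size V -> s_cover (U ++ C) (U ++ V).
Proof.
move=> cov Vp i; rewrite size_cat => Hi.
have [H|H] : i < size U \/ size U <= i by lia.
- have [j occ] := cover_occ cov Vp.
  eexists; split; first exact: occ_app_l occ.
  by exists i; [rewrite size_cat; lia| rewrite H].
- have [j [occ [t Ht E]]] := cov (i - size U) ltac:(lia).
  eexists; split; first exact: occ_app_l occ.
  exists (size U + t); first by rewrite size_cat; lia.
  have -> : (size U + t < size U) = false by lia.
  rewrite addKn E; lia.
Qed.

Lemma cover_dup U x V : s_cover (U ++ x :: V) (U ++ x :: x :: V).
Proof.
have H : s_cover [:: x] [:: x; x].
  move=> i Hi; exists (fun _ => i); split.
  - split=> // -[|t] //= _; split=> //; by case: i Hi => [|[|]].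
  - by exists 0.
have := cover_app_l (U := U) (cover_app_r (X := V) H isT) isT.
by [].
Qed.

Lemma not_prim_dup U x V : ~ s_primitive (U ++ x :: x :: V).
Proof.
move=> P; apply: P; exists (U ++ x :: V); split; first exact: cover_dup.
rewrite !size_cat /=; lia.
Qed.

Lemma cover_map (T' : eqType) (g : T -> T') C S : injective g ->
  s_cover (map g C) (map g S) -> s_cover C S.
Proof.
move=> ig cov i Hi; have [j [[Hinc Hm] [t Ht E]]] := cov i ltac:(by rewrite size_map).
rewrite size_map in Hinc Hm Ht.
exists j; split; last by exists t.
split=> // t' Ht'; have [h1 h2] := Hm t' Ht'.
rewrite size_map !onth_map in h1 h2; split=> //.
exact: (inj_omap ig).
Qed.

Lemma not_sorted_dup (w : seq T) : ~~ sorted (fun x y => x != y) w ->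
  exists U x V, w = U ++ x :: x :: V.
Proof.
elim: w => // a [|b w] IH //=.
case: eqP => [-> _|ne /= H]; first by exists [::], b, w.
have [U [x [V E]]] := IH H.
by exists (a :: U), x, V; rewrite E.
Qed.

Fixpoint subseqs (s : seq T) : seq (seq T) :=
  if s is x :: s' then let r := subseqs s' in map (cons x) r ++ r else [:: [::]].

Lemma subseqs_complete C S : subseq C S -> C \in subseqs S.
Proof.
elim: S C => [|y S IH] [|x C] //=.
- by move=> _; rewrite mem_cat; apply/orP; right; elim: S {IH} => //= z S IHS; rewrite mem_cat IHS orbT.
- case: eqP => [->|_] H; rewrite mem_cat; apply/orP.
  + by left; apply: map_f; apply: IH.
  + by right; apply: IH.
Qed.
End S2.

Fixpoint words (n : nat) (l : nat) : seq (seq nat) :=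
  if n is n'.+1 then [seq x :: w | x <- [seq y <- [:: 0; 1; 2] | y != l], w <- words n' x]
  else [:: [::]].

Lemma mem_f3 (x l : nat) : x < 3 -> l != x -> x \in [seq y <- [:: 0; 1; 2] | y != l].
Proof. by move=> Hx Hl; rewrite mem_filter eq_sym Hl; case: x Hx {Hl} => [|[|[|]]]. Qed.

Lemma words_complete n l (w : seq nat) : size w = n -> all (fun x => x < 3) w ->
  path (fun x y => x != y) l w -> w \in words n l.
Proof.
elim: w n l => [|x w IH] [|n] l //= [Hs] /andP[Hx Ha] /andP[Hl Hp].
apply: allpairs_f_dep; last exact: IH.
exact: mem_f3.
Qed.

Definition P (w C : seq nat) := [&& size C < size w, subseq C w & scovb C w].
Definition cands (w : seq nat) :=
  let r := subseqs w in flatten [seq [seq C <- r | size C == n] | n <- rev (iota 0 (size w))].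
Definition goodw (w : seq nat) := find (P w) (cands w) < size (cands w).
Fixpoint allw (s : seq (seq nat)) := if s is w :: s' then (if goodw w then allw s' else false) else true.

Lemma allwE s : allw s = all goodw s.
Proof. by elim: s => //= w s ->; case: goodw. Qed.

Lemma comp9 : all goodw (words 9 3).
Proof. rewrite -allwE. vm_compute. reflexivity. Qed.

Lemma part_c (T : finType) (w : seq T) : #|T| = 3 -> size w = 9 -> ~ s_primitive w.
Proof.
move=> cT sw.
case Hs: (sorted (fun x y => x != y) w); last first.
  by have [U [x [V ->]]] := not_sorted_dup (negbT Hs); apply: not_prim_dup.
pose g (x : T) : nat := enum_rank x.
have ig : injective g by move=> x y /val_inj/enum_rank_inj.
have Hin : map g w \in words 9 3.
  apply: words_complete; first by rewrite size_map.
  - by apply/allP => _ /mapP[x _ ->]; rewrite /g -cT ltn_ord.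
  - case: w Hs sw => // a w Hs _; rewrite map_cons.
    apply/andP; split; first by rewrite eq_sym neq_ltn /g -cT ltn_ord.
    change (path (fun x y : nat => x != y) (g a) (map g w)); rewrite path_map.
    by apply: sub_path Hs => x y; rewrite /relpre /= (inj_eq ig).
have := allP comp9 _ Hin; rewrite /goodw -has_find => /hasP[C0 _ /and3P[Hsz Hsub Hcov]].
move: Hsub => /subseqP[m Hm E].
rewrite -map_mask in E; subst C0.
move=> Hp; apply: Hp; exists (mask m w); split.
- by apply: (cover_map ig); apply/scovbP.
- by rewrite size_map size_map in Hsz.
Qed.

Definition o0 : 'I_3 := @Ordinal 3 0 isT.
Definition o1 : 'I_3 := @Ordinal 3 1 isT.
Definition o2 : 'I_3 := @Ordinal 3 2 isT.
Definition s0 : seq 'I_3 := [:: o0; o1; o2; o0; o1; o0; o2; o1].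

Lemma comp_s0 : all (fun C => (size C < 8) ==> ~~ scovb C s0) (subseqs s0).
Proof. vm_compute. reflexivity. Qed.

Lemma s0_prim_gen (T : eqType) (f : 'I_3 -> T) : injective f -> s_primitive (map f s0).
Proof.
move=> inj [C [cov Hsz]].
have [j occ] := cover_occ cov isT.
move: (occ_subseq occ) => /subseqP[m Hm E].
rewrite -map_mask in E; subst C.
have cv := cover_map inj cov.
have := allP comp_s0 (mask m s0) (subseqs_complete (mask_subseq m s0)).
rewrite size_map in Hsz; rewrite Hsz /=.
by move/negP; apply; apply/scovbP.
Qed.

Lemma part_b (T : eqType) (a b c : T) : a != b -> b != c -> a != c ->
     s_primitive [:: a; b; c; a; b; a; c; b].
Proof.
move=> ab bc ac.
pose f (i : 'I_3) : T := if val i == 0 then a else if val i == 1 then b else c.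
have inj : injective f.
  move=> [[|[|[|i]]] Hi] [[|[|[|k]]] Hk] //=; rewrite /f /= => E; apply/val_inj => //=;
  move: E; try by move/eqP; rewrite ?(negbTE ab) ?(negbTE bc) ?(negbTE ac) // eq_sym ?(negbTE ab) ?(negbTE bc) ?(negbTE ac).
exact: (s0_prim_gen inj).
Qed.

Theorem mainTheorem5 :
  gamma_is 3 8 /\
  (forall (T : eqType) (a b c : T), a != b -> b != c -> a != c ->
     s_primitive [:: a; b; c; a; b; a; c; b]) /\
  (forall (T : finType) (w : seq T), #|T| = 3 -> size w = 9 -> ~ s_primitive w).
Proof.
split; last by split; [exact: part_b | exact: part_c].
split.
- exists s0; split => //.
  exact: (@part_b _ o0 o1 o2).
- move=> w Hp; rewrite leqNgt; apply/negP => Hw.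
  have Hc := @part_c _ (take 9 w) (card_ord 3) ltac:(by rewrite size_takel).
  apply: Hc => -[C [cov Hsz]]; apply: Hp.
  exists (C ++ drop 9 w); split.
  + rewrite -{2}(cat_take_drop 9 w); apply: cover_app_r cov _.
    by rewrite size_takel.
  + rewrite size_takel // in Hsz.
    rewrite size_cat size_drop; move: Hw Hsz; set n := size w; set m := size C; lia.
Qed.
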